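(* In the setting of the context, for every integer $m\ge 0$ there is a constant $C_m$ (depending on $m$ and on $p$, but not on $N$) such that for all $N\ge 1$, \[ |M_{2m+1}(N)| \;\le\; \frac{C_m}{\sqrt N}. \] In particular $\lim_{N\to\infty} M_{2m+1}(N)=0$.
   Context: Let $p$ be a probability density on $\mathbb{R}$ with mean $0$, variance $1$ and finite moments of all orders. For $N\ge 1$, let $b_1,\dots,b_{N-1}$ be independent random variables with density $p$, set $b_0=0$, and let $A=A_N$ be the $N\times N$ real symmetric Toeplitz matrix with entries $a_{ij}=b_{|i-j|}$ ($1\le i,j\le N$). Let $\lambda_1(A),\dots,\lambda_N(A)$ be its eigenvalues. For an integer $k\ge 0$ define $M_k(A,N)=N^{-(k/2+1)}\sum_{i=1}^N\lambda_i(A)^k = N^{-(k/2+1)}\,\mathrm{Trace}(A^k)$, and $M_k(N)=\mathbb{E}[M_k(A,N)]$, the expectation over the random entries. *)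

(* Defs.v *)
From HB Require Import structures.
From mathcomp Require Import all_boot all_order all_algebra.
From mathcomp Require Import all_classical all_reals all_analysis.
Set Implicit Arguments. Unset Strict Implicit. Unset Printing Implicit Defensive.
Import Order.TTheory GRing.Theory Num.Theory.
Local Open Scope classical_set_scope.
Local Open Scope ring_scope.

Section Toeplitz.
Variable R : realType.

Definition leb := (@lebesgue_measure R).

Definition is_good_density (p : R -> R) : Prop :=
  [/\ measurable_fun setT p,
      (forall x, 0 <= p x),
      (forall k : nat, leb.-integrable setT (fun x => ((x ^+ k) * p x)%:E)) &
    [/\ Rintegral leb setT p = 1,
      Rintegral leb setT (fun x => x * p x) = 0 &
      Rintegral leb setT (fun x => x ^+ 2 * p x) = 1]].

(* Expectation of f(b_1,...,b_n) when b_1,...,b_n are i.i.d. with density p: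
   the iterated integral  int f(x_1,..,x_n) p(x_1)...p(x_n) dx_n ... dx_1. *)
Fixpoint iid_expect (p : R -> R) (n : nat) (f : seq R -> R) : R :=
  match n with
  | 0 => f [::]
  | n'.+1 => Rintegral leb setT
               (fun x => p x * iid_expect p n' (fun s => f (x :: s)))
  end.

(* b_d for d >= 1 is the (d-1)-th entry of s; b_0 = 0. *)
Definition bcoef (s : seq R) (d : nat) : R :=
  if d is d'.+1 then nth 0 s d' else 0.

Definition toeplitz (N : nat) (s : seq R) : 'M[R]_N :=
  \matrix_(i < N, j < N) bcoef s `|(i : nat) - (j : nat)|.

Definition Mk_AN (k N : nat) (s : seq R) : R :=
  (N%:R) `^ (- (k%:R / 2 + 1)) * \tr ((toeplitz N s) ^+ k).

Definition Mk (p : R -> R) (k N : nat) : R :=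
  iid_expect p N.-1 (Mk_AN k N).

End Toeplitz.

(* Main.v *)
Require Import Defs.
From HB Require Import structures.
From mathcomp Require Import all_boot all_order all_algebra.
From mathcomp Require Import all_classical all_reals all_analysis.
From mathcomp Require Import ring lra zify.
Import Order.TTheory GRing.Theory Num.Theory numFieldNormedType.Exports.
Set Implicit Arguments. Unset Strict Implicit. Unset Printing Implicit Defensive.

Fixpoint alls (X : Type) (xs : seq X) (n : nat) : seq (seq X) :=
  if n is n'.+1 then [seq x :: l | x <- xs, l <- alls xs n'] else [:: [::]].

Lemma size_alls (X : Type) (xs : seq X) n : size (alls xs n) = size xs ^ n.
Proof. by elim: n => [|n IH] //=; rewrite size_allpairs IH expnS. Qed.

Lemma mem_alls (X : eqType) (xs : seq X) n l :
  size l = n -> all (mem xs) l -> l \in alls xs n.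
Proof.
elim: n l => [|n IH] [|x l] //= [hs] /andP[hx hl].
exact: allpairs_f hx (IH _ hs hl).
Qed.

Lemma uniq_alls (X : eqType) (xs : seq X) n : uniq xs -> uniq (alls xs n).
Proof.
move=> u; elim: n => [|n IH] //=.
apply: allpairs_uniq => //; by move=> [a l] [b l'] _ _ /= [-> ->].
Qed.

Definition stp (x : nat) (st : bool * nat) := if st.1 then x + st.2 else x - st.2.
Fixpoint walk (x : nat) (sts : seq (bool * nat)) : seq nat :=
  if sts is st :: r then x :: walk (stp x st) r else [:: x].
Definition dstep (a b : nat) := (a <= b, absz (a%:Z - b%:Z)%R).

Lemma walk_pairmap y r : walk y (pairmap dstep y r) = y :: r.
Proof.
elim: r y => [|z r IH] y //=.
have -> : stp y (dstep y z) = z.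
  rewrite /stp /dstep /=.
  case: leqP => h; first by rewrite distnEr // subnKC.
  by rewrite distnEl ?(ltnW h) // subKn // ltnW.
by rewrite IH.
Qed.

Definition cyc (u : seq nat) := if u is x :: r then x :: rcons r x else [::].
Definition dsof (u : seq nat) := if u is x :: r then pairmap (fun a b => absz (a%:Z - b%:Z)%R) x (rcons r x) else [::].

Lemma sumn_ge2 (T : eqType) (t : seq T) (f : T -> nat) :
  (forall x, x \in t -> 1 < f x) -> 2 * size t <= sumn (map f t).
Proof.
elim: t => [|x t IH] h //=.
have h1 := h x (mem_head _ _).
have h2 : 2 * size t <= sumn (map f t) by apply: IH => y hy; apply: h; rewrite inE hy orbT.
rewrite mulnS; exact: leq_add.
Qed.

Lemma two_undup (s : seq nat) :
  (forall x, x \in s -> 1 < count_mem x s) -> 2 * size (undup s) <= size s.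
Proof.
move=> h.
have -> : size s = sumn [seq count_mem x s | x <- undup s].
  rewrite -(perm_size (perm_count_undup s)) size_flatten /shape -map_comp.
  by congr sumn; apply: eq_map => x /=; rewrite size_nseq.
by apply: sumn_ge2 => x; rewrite mem_undup; apply: h.
Qed.

Definition T3 (N m k : nat) :=
  [seq (bc, d) | bc <- [seq (b, c) | b <- alls [:: true; false] k, c <- alls (iota 0 N) m],
                 d <- alls (iota 0 m) k].
Definition Zimg (N m k : nat) : seq (seq nat) :=
  [seq walk a (zip t.1.1 [seq (nth 0 t.1.2 g).+1 | g <- t.2]) | a <- iota 0 N, t <- T3 N m k].

Lemma size_Zimg N m k : size (Zimg N m k) = N * (2 ^ k * N ^ m * m ^ k).
Proof. by rewrite /Zimg /T3 !size_allpairs !size_alls !size_iota. Qed.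

Lemma size_pairmap (T1 T2 : Type) (f : T1 -> T1 -> T2) x s : size (pairmap f x s) = size s.
Proof. by elim: s x => [|y s IH] x //=; rewrite IH. Qed.

Lemma dsof_lt N u : all (fun a => a < N) u -> all (fun d => d < N) (dsof u).
Proof.
case: u => [//|x r] /= /andP[hx hr].
have : all (fun a => a < N) (rcons r x) by rewrite all_rcons hx hr.
move: (rcons r x) => t; elim: t x hx {hr} => [|y t IH] z hz //= /andP[hy ht].
rewrite IH // andbT.
case: (leqP z y) => h; first by rewrite distnEr //; apply: leq_ltn_trans (leq_subr _ _) hy.
by rewrite distnEl ?(ltnW h) //; apply: leq_ltn_trans (leq_subr _ _) hz.
Qed.

Lemma cyc_in_Z N m u :
  all (fun a => a < N) u -> size u = (2 * m).+1 ->
  all (fun d => 0 < d) (dsof u) ->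
  (forall y, y \in map predn (dsof u) -> 1 < count_mem y (map predn (dsof u))) ->
  cyc u \in Zimg N m (2 * m).+1.
Proof.
case: u => [//|x r] hall hsz hpos hcnt.
set ds := dsof (x :: r) in hpos hcnt.
set J := map predn ds in hcnt.
set D := undup J.
have hsD : size D <= m.
  have := two_undup hcnt; rewrite -/D /J size_map /ds /= size_pairmap size_rcons.
  move: hsz => /= hsz; lia.
have hN : x < N by case/andP: hall.
set P := pairmap dstep x (rcons r x).
have hP2 : unzip2 P = ds.
  rewrite /P /ds /=; move: (rcons r x) => t; clear.
  by elim: t x => [|y t IH] z //=; rewrite IH.
have hsP : size P = (2 * m).+1 by rewrite /P size_pairmap size_rcons -hsz.
set v := D ++ nseq (m - size D) 0.
set g := [seq index d.-1 D | d <- ds].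
have hg : [seq (nth 0 v g0).+1 | g0 <- g] = ds.
  rewrite /g -map_comp -[RHS]map_id; apply/eq_in_map => d hd /=.
  have hdD : d.-1 \in D by rewrite mem_undup; apply: map_f.
  rewrite /v nth_cat index_mem hdD nth_index //.
  by apply: prednK; move/allP: hpos; apply.
have -> : cyc (x :: r) = walk x (zip (unzip1 P) [seq (nth 0 v g0).+1 | g0 <- g]).
  by rewrite hg -hP2 zip_unzip /P walk_pairmap.
pose F := fun a (t : seq bool * seq nat * seq nat) => walk a (zip t.1.1 [seq (nth 0 t.1.2 g0).+1 | g0 <- t.2]).
have -> : walk x (zip (unzip1 P) [seq (nth 0 v g0).+1 | g0 <- g]) = F x ((unzip1 P, v), g) by [].
apply: (allpairs_f F); first by rewrite mem_iota add0n.
apply: (allpairs_f (fun bc d => (bc, d))); first apply: (allpairs_f (fun b c => (b, c))).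
- apply: mem_alls; first by rewrite size_map.
  by apply/allP => b _; case: b.
- apply: mem_alls; first by rewrite /v size_cat size_nseq; lia.
  rewrite /v all_cat; apply/andP; split.
    apply/allP => y; rewrite mem_undup => /mapP[d hd ->].
    have := dsof_lt hall; move/allP => /(_ d hd) /= hd1; rewrite mem_iota add0n; lia.
  by apply/allP => y /nseqP[-> _] /=; rewrite mem_iota; lia.
- apply: mem_alls; first by rewrite size_map -hP2 size_map hsP.
  apply/allP => y /mapP[d hd ->] /=; rewrite mem_iota add0n.
  apply: leq_trans hsD; rewrite index_mem mem_undup; exact: map_f.
Qed.

Local Open Scope classical_set_scope.
Local Open Scope ring_scope.

Section Expect.
Variable R : realType.
Variable p : R -> R.
Hypothesis hp : is_good_density p.

Definition mono (js : seq nat) (s : seq R) : R := \prod_(j <- js) nth 0 s j.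
Definition mom (k : nat) : R := Rintegral (@lebesgue_measure R) setT (fun x => x ^+ k * p x).
Definition Ev (n : nat) (js : seq nat) : R :=
  (\prod_(i < n) mom (count_mem (i : nat) js)) * (all (fun j => j < n)%N js)%:R.
Definition shift (js : seq nat) : seq nat := [seq j.-1 | j <- js & j != 0%N].

Lemma mono_cons js x s : mono js (x :: s) = x ^+ count_mem 0%N js * mono (shift js) s.
Proof.
rewrite /mono /shift; elim: js => [|j js IH]; first by rewrite !big_nil expr0 mulr1.
rewrite /= big_cons IH; case: j => [|j] /=.
  by rewrite exprS mulrA.
by rewrite big_cons add0n /=; rewrite mulrCA.
Qed.

Lemma count_shift i js : count_mem i (shift js) = count_mem i.+1 js.
Proof.
elim: js => [//|j js IH] /=; rewrite /shift /=; case: j => [|j] //=.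
by rewrite -/(shift js) IH eqSS.
Qed.

Lemma all_shift n js : all (fun j => j < n)%N (shift js) = all (fun j => j < n.+1)%N js.
Proof.
elim: js => [//|j js IH] /=; rewrite /shift /=; case: j => [|j] //=.
by rewrite -/(shift js) IH ltnS.
Qed.

Lemma Ev_cons n js : Ev n.+1 js = mom (count_mem 0%N js) * Ev n (shift js).
Proof.
rewrite /Ev big_ord_recl /= all_shift mulrA; congr (_ * _ * _).
by apply: eq_bigr => i _; rewrite count_shift.
Qed.

Lemma intg_mom (c : R) (a : nat) :
  (@lebesgue_measure R).-integrable setT (EFin \o (fun x => c * (x ^+ a * p x))).
Proof.
case: hp => _ _ hi _.
apply: (eq_integrable _ _ _ _ (integrableZl _ c (hi a))) => // x _ /=; rewrite EFinM.
Qed.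

Lemma Rint_sum (T : Type) (l : seq T) (f : T -> R -> R) :
  (forall t, (@lebesgue_measure R).-integrable setT (EFin \o f t)) ->
  Rintegral (@lebesgue_measure R) setT (fun x => \sum_(t <- l) f t x)
  = \sum_(t <- l) Rintegral (@lebesgue_measure R) setT (f t).
Proof.
move=> hf; elim: l => [|t l IH].
  rewrite big_nil; under eq_Rintegral do rewrite big_nil.
  by rewrite Rintegral_cst // mul0r.
rewrite big_cons -IH; under eq_Rintegral do rewrite big_cons.
rewrite RintegralD //. all: try exact: hf.
have := @integrable_sum _ _ _ (@lebesgue_measure R) setT measurableT _ l xpredT (fun u x => (f u x)%:E) (fun u _ => hf u).
apply: eq_integrable => // x _ /=; by rewrite sumEFin.
Qed.

Lemma E_sum n (T : Type) (l : seq T) (c : T -> R) (J : T -> seq nat) :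
  iid_expect p n (fun s => \sum_(t <- l) c t * mono (J t) s) =
  \sum_(t <- l) c t * Ev n (J t).
Proof.
elim: n c J => [|n IH] c J /=.
  apply: eq_bigr => t _; congr (_ * _); rewrite /mono /Ev big_ord0 mul1r.
  by case: (J t) => [|j js] /=; rewrite ?big_nil // big_cons nth_nil mul0r.
transitivity (Rintegral (@lebesgue_measure R) setT (fun x => \sum_(t <- l)
   (c t * Ev n (shift (J t))) * (x ^+ count_mem 0%N (J t) * p x))).
  congr Rintegral; apply: funext => x.
  under eq_fun => s do under eq_bigr => t _ do rewrite mono_cons mulrA.
  rewrite (IH (fun t => c t * x ^+ count_mem 0%N (J t)) (fun t => shift (J t))).
  rewrite big_distrr /=; apply: eq_bigr => t _; ring.
rewrite Rint_sum; last by move=> t; apply: intg_mom.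
apply: eq_bigr => t _; rewrite RintegralZl //.
  by rewrite Ev_cons /mom; ring.
by apply: (eq_integrable _ _ _ _ (intg_mom 1 (count_mem 0%N (J t)))) => // x _ /=; rewrite mul1r.
Qed.
End Expect.

Section Tr.
Variable R : realType.

Fixpoint pw N (A : 'M[R]_N) (i : 'I_N) (l : seq 'I_N) (j : 'I_N) : R :=
  if l is x :: l' then A i x * pw A x l' j else A i j.

Lemma pw_expr N (A : 'M[R]_N) K i j :
  (A ^+ K.+1) i j = \sum_(l <- alls (enum 'I_N) K) pw A i l j.
Proof.
elim: K i j => [|K IH] i j; first by rewrite expr1 /= big_seq1.
rewrite exprS -mulmxE mxE /= big_allpairs_dep /= big_enum /=.
by apply: eq_bigr => x _; rewrite IH big_distrr.
Qed.

Definition Fw N (A : 'M[R]_N) (w : seq 'I_N) : R :=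
  if w is x :: l then pw A x l x else 1.

Lemma tr_expr N (A : 'M[R]_N) K :
  \tr (A ^+ K.+1) = \sum_(w <- alls (enum 'I_N) K.+1) Fw A w.
Proof.
rewrite /mxtrace /= big_allpairs_dep /= big_enum /=.
by apply: eq_bigr => i _; rewrite pw_expr.
Qed.

Definition dist (a b : nat) : nat := absz (a%:Z - b%:Z)%R.

Lemma pw_toep N (s : seq R) i l j :
  pw (toeplitz N s) i l j = \prod_(d <- pairmap dist (val i) (rcons (map val l) (val j))) bcoef s d.
Proof.
elim: l i => [|x l IH] i /=; first by rewrite big_seq1 mxE.
by rewrite big_cons IH mxE.
Qed.

Lemma prod_bcoef (s : seq R) ds :
  \prod_(d <- ds) bcoef s d = (all (fun d => 0 < d)%N ds)%:R * mono (map predn ds) s.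
Proof.
rewrite /mono; elim: ds => [|d ds IH] /=; first by rewrite !big_nil mulr1.
rewrite !big_cons IH; case: d => [|d] /=; first by rewrite !mul0r.
by ring.
Qed.

Definition posc N (w : seq 'I_N) := all (fun d => 0 < d)%N (dsof (map val w)).
Definition Jw N (w : seq 'I_N) := map predn (dsof (map val w)).

Lemma Fw_toep N (s : seq R) w :
  Fw (toeplitz N s) w = (posc w)%:R * mono (Jw w) s.
Proof.
case: w => [|x l]; first by rewrite /= /mono big_nil mulr1.
by rewrite /= pw_toep prod_bcoef.
Qed.

End Tr.

Lemma alls_size (X : eqType) (xs : seq X) n l : l \in alls xs n -> size l = n.
Proof.
elim: n l => [|n IH] l /=; first by rewrite inE => /eqP ->.
by case/allpairsP => -[x l'] /= [_ hl ->] /=; rewrite (IH _ hl).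
Qed.

Lemma sum_count_le n (js : seq nat) : (\sum_(i < n) count_mem (i : nat) js <= size js)%N.
Proof.
elim: js => [|y js IH] /=; first by rewrite big1.
rewrite big_split /= addnC -addn1 leq_add //.
case: (ltnP y n) => hy.
  rewrite (bigD1 (Ordinal hy)) //= eqxx big1 // => i /negbTE hi.
  apply/eqP; rewrite eqb0; apply: contraFN hi => /eqP hyi; apply/eqP; apply: val_inj; by rewrite /= hyi.
rewrite big1 // => i _; apply/eqP; rewrite eqb0; apply/eqP => hyi.
by move: (ltn_ord i); rewrite -hyi ltnNge hy.
Qed.

Section Main.
Variable R : realType.
Variable p : R -> R.
Hypothesis hp : is_good_density p.
Variable m : nat.
Let k := (2 * m).+1.

Definition Bm := 1 + \sum_(c < k.+1) `|mom p c|.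

Lemma Bm_ge1 : 1 <= Bm.
Proof. rewrite /Bm lerDl; apply: sumr_ge0 => i _; exact: normr_ge0. Qed.

Lemma mom0 : mom p 0 = 1.
Proof.
case: hp => _ _ _ [h1 _ _]; rewrite /mom -h1.
by apply: eq_Rintegral => x _; rewrite expr0 mul1r.
Qed.

Lemma mom1 : mom p 1 = 0.
Proof.
case: hp => _ _ _ [_ h1 _]; rewrite /mom -h1.
by apply: eq_Rintegral => x _; rewrite expr1.
Qed.

Lemma mom_le c : (c <= k)%N -> `|mom p c| <= Bm ^+ c.
Proof.
move=> hc; case: c hc => [|c] hc; first by rewrite mom0 normr1 expr0.
apply: le_trans (ler_eXnr _ Bm_ge1) => //.
rewrite /Bm (bigD1 (Ordinal (hc : (c.+1 < k.+1)%N))) //=.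
have : 0 <= \sum_(i < k.+1 | i != Ordinal (hc : (c.+1 < k.+1)%N)) `|mom p i|.
  by apply: sumr_ge0 => i _; exact: normr_ge0.
lra.
Qed.

Lemma Ev_bound n js : (size js <= k)%N -> `|Ev p n js| <= Bm ^+ size js.
Proof.
move=> hs; rewrite /Ev normrM.
have ha : `|(all (fun j => j < n)%N js)%:R : R| <= 1 by case: all; rewrite ?normr1 ?normr0.
apply: le_trans (ler_pM (normr_ge0 _) (normr_ge0 _) (lexx _) ha) _.
rewrite mulr1 normr_prod.
apply: le_trans (_ : \prod_(i < n) Bm ^+ count_mem (i : nat) js <= _).
  apply: ler_prod => i _; rewrite normr_ge0 /=; apply: mom_le.
  exact: leq_trans (count_size _ _) hs.
rewrite prodrXr; apply: ler_weXn2l; first exact: Bm_ge1.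
exact: sum_count_le.
Qed.

Lemma good_count n (js : seq nat) : Ev p n js != 0 ->
  forall y, y \in js -> (1 < count_mem y js)%N.
Proof.
rewrite /Ev => hE y hy.
case ha : (all (fun j => j < n)%N js); last by move: hE; rewrite ha mulr0 eqxx.
have hyn : (y < n)%N by move/allP: ha; apply.
have hc : (0 < count_mem y js)%N by rewrite -has_count has_pred1.
rewrite ltn_neqAle hc andbT eq_sym; apply/negP => /eqP h1.
move: hE; rewrite (bigD1 (Ordinal hyn)) //= h1 mom1 mul0r mul0r eqxx //.
Qed.


Definition Q N := alls (enum 'I_N) k.
Definition good N (w : seq 'I_N) := posc w && (Ev p N.-1 (Jw w) != 0).

Lemma cyc_inj : injective cyc.
Proof.
move=> [|x r] [|y r'] //= [<-] h.
by case: (rcons_inj h) => ->.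
Qed.

Lemma size_dsof u : size (dsof u) = size u.
Proof. by case: u => [|x r] //=; rewrite size_pairmap size_rcons. Qed.

Lemma count_good N : (count (@good N) (Q N) <= N * (2 ^ k * N ^ m * m ^ k))%N.
Proof.
rewrite -size_filter -(size_map (fun w : seq 'I_N => cyc (map val w))) -(size_Zimg N m k).
apply: uniq_leq_size.
- rewrite map_inj_in_uniq ?filter_uniq ?uniq_alls ?enum_uniq //.
  move=> w w' _ _ h; apply: (inj_map val_inj); exact: cyc_inj h.
- move=> u /mapP[w]; rewrite mem_filter => /andP[/andP[hpos hE] hw] ->.
  apply: cyc_in_Z.
  + apply/allP => a /mapP[i _ ->]; exact: ltn_ord.
  + by rewrite size_map (alls_size hw).
  + exact: hpos.
  + exact: (good_count hE).
Qed.

Lemma Mk_eq N : Mk p k N =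
  \sum_(w <- Q N) (N%:R `^ (-(k%:R / 2 + 1)) * (posc w)%:R) * Ev p N.-1 (Jw w).
Proof.
rewrite /Mk (_ : Mk_AN k N = fun s => \sum_(w <- Q N)
   (N%:R `^ (-(k%:R / 2 + 1)) * (posc w)%:R) * mono (Jw w) s).
  exact: E_sum.
apply: funext => s; rewrite /Mk_AN /k tr_expr big_distrr; apply: eq_bigr => w _.
by rewrite Fw_toep; apply: mulrA.
Qed.

Lemma sum_indic (T : Type) (l : seq T) (P : pred T) :
  \sum_(w <- l) (P w)%:R = (count P l)%:R :> R.
Proof. by elim: l => [|x l IH]; rewrite ?big_nil // big_cons IH /= natrD. Qed.

Lemma Mk_bound N : (1 <= N)%N ->
  `|Mk p k N| <= (Bm ^+ k * 2 ^+ k * m%:R ^+ k) / Num.sqrt (N%:R : R).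
Proof.
move=> hN; rewrite Mk_eq.
set e := N%:R `^ _.
have he : 0 <= e by apply: powR_ge0.
apply: le_trans (ler_norm_sum _ _ _) _.
apply: le_trans (_ : \sum_(w <- Q N) (e * Bm ^+ k) * (@good N w)%:R <= _).
  rewrite big_seq [X in _ <= X]big_seq; apply: ler_sum => w hw; rewrite /good.
  case hpw: (posc w) => /=; last by rewrite mulr0 mul0r normr0 mulr0.
  case: eqP => [->|hE] /=; first by rewrite mulr0 normr0 mulr0.
  rewrite !mulr1 normrM ger0_norm //; apply: ler_wpM2l => //.
  have hs : size (Jw w) = k by rewrite /Jw size_map size_dsof size_map (alls_size hw).
  by have := @Ev_bound N.-1 (Jw w); rewrite hs; apply.
rewrite -big_distrr /= sum_indic.
apply: le_trans (_ : e * Bm ^+ k * (N * (2 ^ k * N ^ m * m ^ k))%:R <= _).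
  apply: ler_wpM2l; first by apply: mulr_ge0 => //; apply: exprn_ge0; apply: le_trans Bm_ge1.
  by rewrite ler_nat; apply: count_good.
have key : e * N%:R ^+ m.+1 = (Num.sqrt (N%:R : R))^-1.
  rewrite -powR_mulrn ?ler0n // /e -powRD; last first.
    by apply/implyP => _; rewrite pnatr_eq0 -lt0n.
  have -> : -(k%:R / 2 + 1) + m.+1%:R = -(2^-1 : R).
    by rewrite /k -addn1 natrD natrM -addn1 natrD; field.
  by rewrite powRN powR12_sqrt // ler0n.
rewrite le_eqVlt; apply/orP; left; apply/eqP.
rewrite (_ : e * Bm ^+ k * _ = (Bm ^+ k * 2 ^+ k * m%:R ^+ k) * (e * N%:R ^+ m.+1)); first by rewrite key.
by rewrite !natrM !natrX exprS; ring.
Qed.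

End Main.
Lemma lim_of_bound (R : realType) (u : nat -> R) C : 0 <= C ->
  (forall N, (1 <= N)%N -> `|u N| <= C / Num.sqrt N%:R) -> u @ \oo --> 0.
Proof.
move=> hC hb; apply/cvgr0Pnorm_lt => eps he.
exists (Num.trunc ((C / eps) ^+ 2)).+1 => // N /= hN.
have hN1 : (1 <= N)%N by apply: leq_trans hN.
apply: le_lt_trans (hb N hN1) _.
have hs : 0 < Num.sqrt (N%:R : R) by rewrite (sqrtr_gt0 (N%:R : R)) ltr0n.
have h1 : (C / eps) ^+ 2 < N%:R.
  apply: lt_le_trans (truncnS_gt _) _; rewrite ler_nat; exact: hN.
have h2 : C / eps < Num.sqrt N%:R.
  rewrite -ltr_sqrt ?ltr0n // in h1; rewrite sqrtr_sqr ger0_norm in h1 => //.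
  by apply: divr_ge0 => //; apply: ltW.
by rewrite ltr_pdivrMr // mulrC -ltr_pdivrMr.
Qed.

Theorem mainTheorem2 (R : realType) (p : R -> R) (hp : is_good_density p) :
  forall m : nat,
    (exists C : R, forall N : nat, (1 <= N)%N ->
        `|Mk p (2 * m).+1 N| <= C / Num.sqrt (N%:R))
    /\ (fun N : nat => Mk p (2 * m).+1 N) @ \oo --> (0 : R)%R.
Proof.
move=> m.
have hC : 0 <= Bm p m ^+ (2 * m).+1 * 2 ^+ (2 * m).+1 * m%:R ^+ (2 * m).+1 :> R.
  apply: mulr_ge0; first apply: mulr_ge0; apply: exprn_ge0 => //.
  exact: le_trans (Bm_ge1 p m).
split.
  exists (Bm p m ^+ (2 * m).+1 * 2 ^+ (2 * m).+1 * m%:R ^+ (2 * m).+1) => N hN.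
  exact: Mk_bound.
apply: (lim_of_bound hC) => N hN; exact: Mk_bound.
Qed.
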